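(* Let $k$ be an infinite field and $n\geq 1$. Then the canonical homomorphism $\mathrm{BCr}_n(k)\to\mathrm{Sym}(\mathbb{P}^n(k))$ is injective.
   Context: $\mathrm{BCr}_n(k)$ is the group of birational self-maps $f$ of $\mathbb{P}^n$ over $k$ such that both $f$ and $f^{-1}$ are defined at every point of $\mathbb{P}^n(k)$; the canonical homomorphism sends $f$ to the permutation it induces on $\mathbb{P}^n(k)$. *)

(* Defs.v *)
From HB Require Import structures.
From mathcomp Require Import all_boot all_order all_algebra.
From mathcomp Require Import mpoly.
Set Implicit Arguments. Unset Strict Implicit. Unset Printing Implicit Defensive.
Import Order.TTheory GRing.Theory.
Local Open Scope ring_scope.

Definition infinite_field (k : fieldType) : Prop :=
  forall s : seq k, exists x : k, x \notin s.

(* k-points of P^n: nonzero vectors of k^(n+1), up to nonzero scaling. *)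
Definition kpoint (k : fieldType) (n : nat) (v : 'I_n.+1 -> k) : Prop :=
  exists i, v i != 0.

Definition same_kpoint (k : fieldType) (n : nat) (v w : 'I_n.+1 -> k) : Prop :=
  exists c : k, c != 0 /\ forall i, w i = c * v i.

(* A representative of a rational map P^n -/-> P^n: an (n+1)-tuple of
   homogeneous polynomials of a common degree, not all zero. *)
Definition ratmap (k : fieldType) (n : nat) := n.+1.-tuple {mpoly k[n.+1]}.

Definition is_rep (k : fieldType) (n : nat) (F : ratmap k n) : Prop :=
  (exists d : nat, forall i, tnth F i \is d.-homog) /\ exists i, tnth F i != 0.

(* Two representatives define the same rational map (proportional tuples). *)
Definition rat_equiv (k : fieldType) (n : nat) (F G : ratmap k n) : Prop :=
  forall i j, tnth F i * tnth G j = tnth F j * tnth G i.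

(* Composition g o f  (f = F applied first). *)
Definition rat_comp (k : fieldType) (n : nat) (G F : ratmap k n) : ratmap k n :=
  [tuple comp_mpoly F (tnth G i) | i < n.+1].

Definition rat_id (k : fieldType) (n : nat) : ratmap k n :=
  [tuple 'X_i | i < n.+1].

Definition rat_eval (k : fieldType) (n : nat) (F : ratmap k n) (v : 'I_n.+1 -> k)
  : 'I_n.+1 -> k := fun i => (tnth F i).@[v].

Definition defined_at (k : fieldType) (n : nat) (F : ratmap k n) (v : 'I_n.+1 -> k)
  : Prop := exists G : ratmap k n, rat_equiv F G /\ exists i, rat_eval G v i != 0.

Definition birat_inverse (k : fieldType) (n : nat) (F G : ratmap k n) : Prop :=
  [/\ is_rep G, is_rep (rat_comp G F), rat_equiv (rat_comp G F) (rat_id k n),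
      is_rep (rat_comp F G) & rat_equiv (rat_comp F G) (rat_id k n)].

Definition in_BCr (k : fieldType) (n : nat) (F : ratmap k n) : Prop :=
  is_rep F /\ exists G : ratmap k n, birat_inverse F G /\
    (forall v, kpoint v -> defined_at F v) /\ (forall v, kpoint v -> defined_at G v).

Definition induces (k : fieldType) (n : nat) (F : ratmap k n) (v w : 'I_n.+1 -> k)
  : Prop := exists G : ratmap k n, rat_equiv F G /\ kpoint (rat_eval G v) /\
     same_kpoint (rat_eval G v) w.

(* Main.v *)
Require Import Defs.
From HB Require Import structures.
From mathcomp Require Import all_boot all_order all_algebra.
From mathcomp Require Import mpoly.
From mathcomp Require Import ring.
Set Implicit Arguments. Unset Strict Implicit. Unset Printing Implicit Defensive.
Import Order.TTheory GRing.Theory.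
Local Open Scope ring_scope.
Local Notation widen := (widen_ord (leqnSn _)).

Lemma mnm_split N (m m0 : 'X_{1..N.+1}) :
  ([multinom (m (widen i)) | i < N] == [multinom (m0 (widen i)) | i < N])
   && (m ord_max == m0 ord_max) = (m == m0).
Proof.
apply/idP/eqP => [/andP[/eqP e1 /eqP e2]|->]; last by rewrite !eqxx.
apply/mnmP => i; case: (unliftP ord_max i) => [j ->|->] //.
have -> : lift ord_max j = widen j by apply/val_inj; rewrite /= /bump leqNgt ltn_ord.
by move/mnmP: e1 => /(_ j); rewrite !mnmE.
Qed.

Lemma coef_mcoeff_sum N (R : nzRingType) (T : Type) (r : seq T)
   (F : T -> {poly {mpoly R[N]}}) j m :
  ((\sum_(x <- r) F x)`_j)@_m = \sum_(x <- r) ((F x)`_j)@_m.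
Proof.
elim: r => [|x r IH]; first by rewrite !big_nil coef0 mcoeff0.
by rewrite !big_cons coefD mcoeffD IH.
Qed.

Lemma mcoeff_sum N (R : nzRingType) (T : Type) (r : seq T)
   (F : T -> {mpoly R[N]}) m :
  (\sum_(x <- r) F x)@_m = \sum_(x <- r) (F x)@_m.
Proof.
elim: r => [|x r IH]; first by rewrite !big_nil mcoeff0.
by rewrite !big_cons mcoeffD IH.
Qed.

Lemma muni_coef N (R : nzRingType) (p : {mpoly R[N.+1]}) (m0 : 'X_{1..N.+1}) :
  ((muni p)`_(m0 ord_max))@_[multinom (m0 (widen i)) | i < N] = p@_m0.
Proof.
rewrite muniE coef_mcoeff_sum.
rewrite [in RHS](mpolyE p) mcoeff_sum.
apply: eq_bigr => m _.
rewrite coefZ coefXn mcoeffZ mcoeffX -mnm_split.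
rewrite (eq_sym (m0 ord_max)); case: (m ord_max == m0 ord_max).
  by rewrite andbT mulr1 mcoeffZ mcoeffX.
by rewrite andbF mulr0 mcoeff0 mulr0.
Qed.

Lemma muni_eval N (k : fieldType) (p : {mpoly k[N.+1]}) (v : 'I_N.+1 -> k) :
  p.@[v] = (map_poly (meval (fun i => v (widen i))) (muni p)).[v ord_max].
Proof.
rewrite muniE mevalE rmorph_sum horner_sum; apply: eq_bigr => m _.
rewrite big_ord_recr /= map_polyZ map_polyXn hornerZ hornerXn.
rewrite [X in _ = X * _]/= mevalZ mevalX mulrA.
congr (_ * _ * _); apply: eq_bigr => i _; by rewrite mnmE.
Qed.

Lemma infinite_uniq (k : fieldType) :
  (forall s : seq k, exists x : k, x \notin s) ->
  forall n, exists s : seq k, uniq s /\ size s = n.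
Proof.
move=> Hk; elim=> [|n [s [us ss]]]; first by exists [::].
have [x xs] := Hk s; exists (x :: s); by rewrite /= xs us ss.
Qed.

Lemma poly_vanish (k : fieldType) :
  (forall s : seq k, exists x : k, x \notin s) ->
  forall q : {poly k}, (forall t, q.[t] = 0) -> q = 0.
Proof.
move=> Hk q Hq; apply/eqP; apply/negPn/negP => nq.
have [s [us ss]] := infinite_uniq Hk (size q).
have ar : all (root q) s by apply/allP => x _; rewrite /root Hq.
by have := max_poly_roots nq ar us; rewrite ss ltnn.
Qed.

Lemma mpoly_vanish (k : fieldType) :
  (forall s : seq k, exists x : k, x \notin s) ->
  forall N (p : {mpoly k[N]}), (forall v, p.@[v] = 0) -> p = 0.
Proof.
move=> Hk; elim=> [|N IH] p Hp.
  by rewrite (nvar0_mpolyC p); have := Hp (fun _ => 0); rewrite {1}(nvar0_mpolyC p) mevalC => ->.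
have Hu : muni p = 0.
  apply/polyP => j; rewrite coef0; apply: IH => w.
  rewrite -(coef_map (meval w)).
  suff -> : map_poly (meval w) (muni p) = 0 by rewrite coef0.
  apply: (poly_vanish Hk) => t.
  pose v := fun i : 'I_N.+1 => oapp w t (insub (val i) : option 'I_N).
  have -> : map_poly (meval w) (muni p) = map_poly (meval (fun i => v (widen i))) (muni p).
    apply: eq_map_poly => x; apply: meval_eq => i.
    by rewrite /v /= valK.
  have -> : t = v ord_max by rewrite /v /= insubF ?ltnn.
  by rewrite -muni_eval Hp.
apply/mpolyP => m; rewrite mcoeff0 -muni_coef Hu coef0 mcoeff0 //.
Qed.

Lemma pointwise (k : fieldType) (n : nat) (F1 F2 : ratmap k n) (v : 'I_n.+1 -> k) i j :
  defined_at F1 v ->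
  (forall w, induces F1 v w -> induces F2 v w) ->
  ((tnth F1 i * tnth F2 j - tnth F1 j * tnth F2 i).@[v]) = 0.
Proof.
move=> [G1 [e1 [a Ha]]] Hind.
have [G2 [e2 [[b Hb] [c [c0 Hc]]]]] :
   induces F2 v (rat_eval G1 v).
  apply: Hind; exists G1; split=> //; split; first by exists a.
  by exists 1; split; [exact: oner_neq0 | move=> l; rewrite mul1r].
have Ha2 : rat_eval G2 v a != 0.
  by apply/eqP => h; move: Ha; rewrite Hc h mulr0 eqxx.
have E1 x : (tnth F1 x).@[v] = (tnth F1 a).@[v] * rat_eval G1 v x / rat_eval G1 v a.
  have := congr1 (meval v) (e1 x a); rewrite !mevalM -/(rat_eval G1 v x) -/(rat_eval G1 v a) => h.
  by apply: (mulIf Ha); rewrite divfK // h mulrC.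
have E2 x : (tnth F2 x).@[v] = (tnth F2 a).@[v] * rat_eval G2 v x / rat_eval G2 v a.
  have := congr1 (meval v) (e2 x a); rewrite !mevalM -/(rat_eval G2 v x) -/(rat_eval G2 v a) => h.
  by apply: (mulIf Ha2); rewrite divfK // h mulrC.
rewrite mevalB !mevalM E1 E2 (E1 j) (E2 i) !Hc.
by apply/eqP; rewrite subr_eq0; apply/eqP; ring.
Qed.

Theorem proposition4p19 (k : fieldType) (n : nat) :
  infinite_field k -> (1 <= n)%N ->
  forall F1 F2 : ratmap k n, in_BCr F1 -> in_BCr F2 ->
  (forall v : 'I_n.+1 -> k, kpoint v ->
     forall w : 'I_n.+1 -> k, induces F1 v w -> induces F2 v w) ->
  rat_equiv F1 F2.
Proof.
move=> Hk _ F1 F2 [_ [G [_ [Hdef _]]]] _ Hind i j.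
pose P := tnth F1 i * tnth F2 j - tnth F1 j * tnth F2 i.
have HX : ('X_ord0 * P) = 0.
  apply: (mpoly_vanish Hk) => v.
  rewrite mevalM mevalXU.
  have [kp|nkp] := boolP [exists l, v l != 0].
    have kv : kpoint v by move/existsP: kp.
    by rewrite pointwise ?mulr0 //; [exact: Hdef | exact: Hind].
  have -> : v ord0 = 0.
    by apply/eqP; move/existsP: nkp => h; apply/negPn/negP => h2; apply: h; exists ord0.
  by rewrite mul0r.
have X0 : ('X_(@ord0 n) : {mpoly k[n.+1]}) != 0.
  apply/eqP => h; have := congr1 (meval (fun _ => 1 : k)) h.
  by rewrite mevalXU meval0; apply/eqP; exact: oner_neq0.
apply/eqP; rewrite -subr_eq0; apply/eqP.
by move/eqP: HX; rewrite mulf_eq0 (negbTE X0) => /eqP.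
Qed.
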